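(* For every integer $n\ge 3$, the complete graph $K_n$ satisfies $\mathrm{ppn}(K_n)=\lceil \log_2(n)\rceil - 1$.
   Context: A $k$-prime product distance labeling of a finite graph $G$ (for a positive integer $k$) is an injective map $L:V(G)\to\mathbb{Z}$ such that $|L(u)-L(v)|>1$ for all distinct vertices $u,v$ of $G$, and such that for every pair of adjacent vertices $u,v$ the integer $|L(u)-L(v)|$ has at most $k$ prime factors counted with multiplicity. $G$ is a $k$-prime product graph if it has such a labeling. The prime product number $\mathrm{ppn}(G)$ is the integer $k$ such that $G$ is a $k$-prime product graph but not a $(k-1)$-prime product graph (equivalently, the least such $k$). *)

(* Defs.v *)
From mathcomp Require Import all_boot all_order all_algebra.
Set Implicit Arguments. Unset Strict Implicit. Unset Printing Implicit Defensive.
Import Order.TTheory GRing.Theory Num.Theory.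

Definition bigomega (m : nat) : nat := \sum_(p <- primes m) logn p m.

(* A simple graph: vertex type T : finType with symmetric irreflexive edge relation e. *)
Definition kpp_labeling (T : finType) (e : rel T) (k : nat) (L : T -> int) : Prop :=
  injective L /\
  (forall u v : T, u != v -> (1 < `|L u - L v|)%N) /\
  (forall u v : T, e u v -> (bigomega `|L u - L v| <= k)%N).

Definition kpp_graph (T : finType) (e : rel T) (k : nat) : Prop :=
  exists L : T -> int, kpp_labeling e k L.

Definition is_ppn (T : finType) (e : rel T) (k : nat) : Prop :=
  (0 < k)%N /\ kpp_graph e k /\ (forall j : nat, (0 < j)%N -> kpp_graph e j -> (k <= j)%N).

Definition complete_graph (n : nat) : rel 'I_n := fun u v => u != v.

(* Main.v *)
Require Import Defs.
From mathcomp Require Import all_boot all_order all_algebra zify.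
Import Order.TTheory GRing.Theory Num.Theory.

Lemma omega_pow (b m : nat) : (0 < m)%N ->
  (forall p, prime p -> (p %| m)%N -> (b <= p)%N) -> (b ^ bigomega m <= m)%N.
Proof.
move=> m0 hb.
rewrite {2}(prod_prime_decomp m0) prime_decompE big_map /bigomega expn_sum.
rewrite !big_seq; apply: leq_prod => p; rewrite mem_primes => /and3P[pp _ pd] /=.
have hbp := hb p pp pd.
elim: (logn p m) => [//|e IH]; rewrite !expnS; exact: leq_mul.
Qed.

Lemma omega_ge2 (d j : nat) : (0 < d)%N -> (2 ^ j %| d)%N -> (j <= bigomega d)%N.
Proof.
move=> d0 hd.
have hl : (j <= logn 2 d)%N by rewrite -pfactor_dvdn.
case: j hd hl => [//|j] hd hl.
have h2 : 2 \in primes d.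
  rewrite mem_primes d0 /=; apply: dvdn_trans hd; exact: dvdn_exp.
rewrite /bigomega (big_rem _ h2) /=.
exact: leq_trans hl (leq_addr _ _).
Qed.

Lemma pow23 k : (0 < k)%N -> (2 ^ k.+2 <= 3 ^ k.+1)%N.
Proof.
case: k => // k _; elim: k => [//|k IH].
rewrite [X in (X <= _)%N]expnS [X in (_ <= X)%N]expnS.
have h3 : (2 * 2 ^ k.+3 <= 3 * 3 ^ k.+2)%N by apply: leq_mul.
exact: h3.
Qed.

Lemma om_bound b d e : (1 < b)%N -> (b ^ bigomega d <= d)%N -> (d < b ^ e.+1)%N ->
  (bigomega d <= e)%N.
Proof.
move=> hb h1 h2; have := leq_ltn_trans h1 h2; by rewrite ltn_exp2l.
Qed.

Lemma key k u v : (0 < k)%N -> (u < v)%N -> (v < 2 ^ k.+1)%N ->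
  (1 < (2*v + (2^k <= v)) - (2*u + (2^k <= u)))%N /\
  (bigomega ((2*v + (2^k <= v)) - (2*u + (2^k <= u))) <= k)%N.
Proof.
move=> k0 uv vlt.
have eP : (2 ^ k.+1 = 2 * 2 ^ k)%N by rewrite expnS.
have hev : forall t, (0 < t)%N -> (t < 2^k)%N -> (bigomega (2 * t) <= k)%N.
  move=> t t0 tl; apply: (@om_bound 2) => //.
  - apply: omega_pow; first by lia.
    by move=> p pp _; apply: prime_gt1.
  - lia.
have hod : forall t, (0 < t)%N -> (t < 2 ^ k.+1)%N -> (bigomega (2 * t + 1) <= k)%N.
  move=> t t0 tl; apply: (@om_bound 3) => //.
  - apply: omega_pow; first by lia.
    move=> p pp pd; have p1 := prime_gt1 pp.
    case: (ltngtP p 2) => [h|h|h2]; [lia|lia|].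
    by move: pd; rewrite h2 => /dvdnP[q]; lia.
  - have := @pow23 k k0. rewrite expnS; lia.
case: (leqP (2^k) u) => hu; case: (leqP (2^k) v) => hv /=.
- have -> : (2 * v + 1 - (2 * u + 1) = 2 * (v - u))%N by lia.
  split; first by lia. apply: hev; lia.
- lia.
- have -> : (2 * v + 1 - (2 * u + 0) = 2 * (v - u) + 1)%N by lia.
  split; first by lia. apply: hod; lia.
- have -> : (2 * v + 0 - (2 * u + 0) = 2 * (v - u))%N by lia.
  split; first by lia. apply: hev; lia.
Qed.

Theorem mainTheorem3 (n : nat) (hn : (3 <= n)%N) :
  is_ppn (@complete_graph n) (up_log 2 n).-1.
Proof.
set k := (up_log 2 n).-1.
have n1 : (1 < n)%N by lia.
have hk : up_log 2 n = k.+1.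
  rewrite /k prednK //; by rewrite up_log_gt0 n1.
have nle : (n <= 2 ^ k.+1)%N by rewrite -hk; apply: up_logP.
have k0 : (0 < k)%N.
  case: (posnP k) => // k00; move: nle; rewrite k00 expn1; lia.
split; first exact: k0.
split.
- pose g (i : nat) : int := Posz (2 * i + (2^k <= i))%N.
  have gen : forall a b : nat, a != b -> (a < 2 ^ k.+1)%N -> (b < 2 ^ k.+1)%N ->
      (1 < `|g a - g b|)%N /\ (bigomega `|g a - g b| <= k)%N.
    move=> a b ab ha hb; rewrite /g.
    case: (ltngtP a b) => h.
    + rewrite distnEr; last by move: (@key k a b k0 h hb); lia.
      exact: key.
    + rewrite distnEl; last by move: (@key k b a k0 h ha); lia.
      exact: key.
    + by rewrite h eqxx in ab.
  exists (fun i : 'I_n => g i).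
  have gen' : forall u v : 'I_n, u != v ->
      (1 < `|g u - g v|)%N /\ (bigomega `|g u - g v| <= k)%N.
    move=> u v uv; apply: gen.
    + by [].
    + exact: leq_trans (ltn_ord u) nle.
    + exact: leq_trans (ltn_ord v) nle.
  split; [|split].
  + move=> u v huv; apply/eqP; apply/negPn/negP => uv.
    have [h _] := gen' u v uv.
    by move: h; rewrite huv subrr.
  + by move=> u v uv; case: (gen' u v uv).
  + by move=> u v uv; case: (gen' u v uv).
- move=> j j0 [L [Linj [Ldist Lom]]].
  set M := (2 ^ j.+1)%N.
  have M0 : (0 < M)%N by rewrite expn_gt0.
  have hM : forall i, (absz (L i %% (Posz M))%Z < M)%N.
    move=> i.
    have h1 := @modz_ge0 (L i) (Posz M) ltac:(by rewrite eqz_nat -lt0n).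
    have h2 := @ltz_pmod (L i) (Posz M) ltac:(by rewrite ltz_nat).
    lia.
  pose f (i : 'I_n) : 'I_M := Ordinal (hM i).
  have finj : injective f.
    move=> a b /(congr1 val) /= h.
    apply/eqP; apply/negPn/negP => hab.
    have hom := Lom a b hab.
    have hd := Ldist a b hab.
    have h1 := @modz_ge0 (L a) (Posz M) ltac:(by rewrite eqz_nat -lt0n).
    have h1' := @modz_ge0 (L b) (Posz M) ltac:(by rewrite eqz_nat -lt0n).
    have dv : ((Posz M) %| (L a - L b)%R)%Z.
      rewrite -eqz_mod_dvd; apply/eqP; lia.
    rewrite dvdzE /= in dv.
    have d0 : (0 < `|(L a - L b)%R|)%N by lia.
    have hh := @omega_ge2 _ _ d0 dv.
    by have := leq_trans hh hom; rewrite ltnn.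
  have := leq_card f finj; rewrite !card_ord => nM.
  have : (up_log 2 n <= j.+1)%N by apply: up_log_min.
  rewrite hk; lia.
Qed.
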